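(* Let $k\ge 2$ and let $A_k$ be the $k\times k^2$ array whose entry in row $r$ and column $j=sk+c$ (with $0\le r,s,c\le k-1$) is $(s+rc)\bmod k$. Suppose that at two distinct L-positions of $A_k$ the L-fillings read are $(a,b,d_1)$ and $(a,b,d_2)$ respectively (same $a$ and same $b$). Then the cells containing $d_1$ and $d_2$ lie in different rows (equivalently, the two cells containing $a$ lie in different rows).
   Context: Array indices are cyclic: rows mod $k$, columns mod $k^2$. Every column index $j\in\{0,\dots,k^2-1\}$ is written uniquely as $j=sk+c$ with $0\le s,c\le k-1$; $s$ is the square number and $c$ the column number (within the square). An L-position is a pair $(i,j)$, and the L-filling read at $(i,j)$ is the triple $(A(i,j),\,A(i+1 \bmod k,\,j),\,A(i+1 \bmod k,\,j+1 \bmod k^2))$: the upper-left cell $a$, the cell $b$ directly below it, and the cell $d$ directly to the right of $b$. Two L-positions are distinct if they differ as pairs $(i,j)$. *)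

(* Defs.v *)
From mathcomp Require Import all_boot.
Set Implicit Arguments. Unset Strict Implicit. Unset Printing Implicit Defensive.

Definition Ak (k r j : nat) : nat := (j %/ k + r * (j %% k)) %% k.

Definition Lfill (k i j : nat) : nat * nat * nat :=
  (Ak k i j, Ak k (i.+1 %% k) j, Ak k (i.+1 %% k) (j.+1 %% (k ^ 2))).

(* Main.v *)
Require Import Defs.
From mathcomp Require Import all_boot.
From mathcomp Require Import zify.

Lemma Ak_next k i j : Ak k (i.+1 %% k) j = (j %/ k + i * (j %% k) + j %% k) %% k.
Proof.
rewrite /Ak -modnDmr modnMml modnDmr mulSn; congr (_ %% _); lia.
Qed.

Theorem lemma2 (k : nat) (hk : 2 <= k)
  (i1 j1 i2 j2 a b d1 d2 : nat)
  (hi1 : i1 < k) (hj1 : j1 < k ^ 2) (hi2 : i2 < k) (hj2 : j2 < k ^ 2)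
  (hdist : (i1, j1) <> (i2, j2))
  (hL1 : Lfill k i1 j1 = (a, b, d1))
  (hL2 : Lfill k i2 j2 = (a, b, d2)) :
  i1.+1 %% k <> i2.+1 %% k.
Proof.
move=> hi.
have ei : i1 = i2.
  have [h1|h1] := ltnP i1.+1 k; have [h2|h2] := ltnP i2.+1 k.
  - by move: hi; rewrite !modn_small //; case.
  - have e2 : i2.+1 = k by lia.
    by move: hi; rewrite e2 modnn modn_small.
  - have e1 : i1.+1 = k by lia.
    by move: hi; rewrite e1 modnn (modn_small h2).
  - lia.
subst i2.
case: hL1 => ha1 hb1 _; case: hL2 => ha2 hb2 _.
rewrite Ak_next in hb1; rewrite Ak_next in hb2.
rewrite /Ak in ha1 ha2.
have hc : j1 %% k = j2 %% k.
  have e : (j1 %/ k + i1 * (j1 %% k) + j1 %% k = j2 %/ k + i1 * (j2 %% k) + j1 %% k %[mod k]).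
    by rewrite -modnDml ha1 -ha2 modnDml.
  have e' : (j2 %/ k + i1 * (j2 %% k) + j1 %% k = j2 %/ k + i1 * (j2 %% k) + j2 %% k %[mod k]).
    by rewrite -e hb1 hb2.
  move/eqP: e'; rewrite eqn_modDl !modn_mod => /eqP //.
have hs : j1 %/ k = j2 %/ k.
  move: ha1; rewrite -ha2 hc => /eqP; rewrite eqn_modDr.
  have l1 : j1 %/ k < k by rewrite ltn_divLR; lia.
  have l2 : j2 %/ k < k by rewrite ltn_divLR; lia.
  by rewrite !modn_small // => /eqP.
apply: hdist; congr (_, _).
by rewrite (divn_eq j1 k) (divn_eq j2 k) hc hs.
Qed.
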